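(* For every $\varphi\in\mathbb{R}$, let $|\varphi\rangle = P(\varphi)|+\rangle = (|0\rangle + e^{i\varphi}|1\rangle)/\sqrt{2}$. Then $$C\bigl(|\varphi\rangle\langle\varphi|\bigr) = \frac{|\sin\varphi| + |\cos\varphi| - 1}{2}.$$
   Context: Single-qubit phase-point operators: for $q,p\in\{0,1\}$, $A_{(q,p)} = \tfrac12\bigl(I + (-1)^p X + (-1)^{q+p} Y + (-1)^q Z\bigr)$, where $X,Y,Z$ are the Pauli matrices. The Wigner function of a single-qubit density matrix $\rho$ is the vector $W_\rho\in\mathbb{R}^4$ with entries $W_\rho(q,p) = \tfrac12\operatorname{tr}(\rho A_{(q,p)})$. The single-qubit stabilizer states are the six pure states $|0\rangle,|1\rangle,|\pm\rangle=(|0\rangle\pm|1\rangle)/\sqrt2,|\pm i\rangle=(|0\rangle\pm i|1\rangle)/\sqrt2$. The stabilizer polytope $\mathcal{W}_{\mathrm{free}}\subset\mathbb{R}^4$ is the convex hull of the Wigner vectors of the stabilizer states. The Wigner distance of $\rho$ is $C(\rho) = \min_{f\in\mathcal{W}_{\mathrm{free}}} \|W_\rho - f\|_1$, with $\|\cdot\|_1$ the $\ell^1$ norm on $\mathbb{R}^4$. The phase gate is $P(\varphi) = \mathrm{diag}(1, e^{i\varphi})$. *)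

(* Defs.v *)
From HB Require Import structures.
From mathcomp Require Import all_boot all_order all_algebra.
From mathcomp Require Import complex.
From mathcomp Require Import classical_sets reals trigo.
Set Implicit Arguments. Unset Strict Implicit. Unset Printing Implicit Defensive.
Import Order.TTheory GRing.Theory Num.Theory ComplexField.
Local Open Scope ring_scope.
Local Open Scope complex_scope.

Section Qubit.
Variable R : realType.
Local Notation C := R[i].

Definition mx22 (a b c d : C) : 'M[C]_2 :=
  \matrix_(i < 2, j < 2)
    if (i : nat) == 0%N then (if (j : nat) == 0%N then a else b)
    else (if (j : nat) == 0%N then c else d).

Definition PauliI : 'M[C]_2 := mx22 1 0 0 1.
Definition PauliX : 'M[C]_2 := mx22 0 1 1 0.
Definition PauliY : 'M[C]_2 := mx22 0 (- 'i) 'i 0.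
Definition PauliZ : 'M[C]_2 := mx22 1 0 0 (-1).

Definition phase_point (q p : 'I_2) : 'M[C]_2 :=
  (1 / 2%:R) *: (PauliI + ((-1) ^+ p) *: PauliX
                 + ((-1) ^+ ((q : nat) + (p : nat))%N) *: PauliY + ((-1) ^+ q) *: PauliZ).

Definition ket (a b : C) : 'cV[C]_2 := \col_(i < 2) if (i : nat) == 0%N then a else b.
Definition adjoint m n (A : 'M[C]_(m, n)) : 'M[C]_(n, m) := (map_mx conjc A)^T.
Definition proj (v : 'cV[C]_2) : 'M[C]_2 := v *m adjoint v.

(* Wigner function: W_rho(q,p) = 1/2 tr(rho A_(q,p)), as a real vector
   (real part; the trace is real for Hermitian rho). *)
Definition wigner (rho : 'M[C]_2) : 'I_2 * 'I_2 -> R :=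
  fun x => complex.Re ((1 / 2%:R) * \tr (rho *m phase_point x.1 x.2)).

Definition invsqrt2 : C := (Num.sqrt (2%:R : R))^-1 %:C.

Definition stab_ket (k : 'I_6) : 'cV[C]_2 :=
  match (k : nat) with
  | 0%N => ket 1 0
  | 1%N => ket 0 1
  | 2%N => ket invsqrt2 invsqrt2
  | 3%N => ket invsqrt2 (- invsqrt2)
  | 4%N => ket invsqrt2 ('i * invsqrt2)
  | _ => ket invsqrt2 (- ('i * invsqrt2))
  end.

Definition W_free : set ('I_2 * 'I_2 -> R) :=
  [set f | exists lam : 'I_6 -> R,
     (forall k, 0 <= lam k) /\ \sum_k lam k = 1 /\
     forall x, f x = \sum_k lam k * wigner (proj (stab_ket k)) x].

Definition l1norm (g : 'I_2 * 'I_2 -> R) : R := \sum_x `|g x|.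

(* Wigner distance: C(rho) = min_{f in W_free} || W_rho - f ||_1
   (the minimum exists by compactness; we take it as an infimum) *)
Definition wigner_distance (rho : 'M[C]_2) : R :=
  inf [set r | exists2 f, W_free f & r = l1norm (fun x => wigner rho x - f x)].

Definition expi (phi : R) : C := cos phi +i* sin phi.
Definition phase_gate (phi : R) : 'M[C]_2 := mx22 1 0 0 (expi phi).
Definition ket_plus : 'cV[C]_2 := ket invsqrt2 invsqrt2.

End Qubit.

(* Main.v *)
Require Import Defs.
From HB Require Import structures.
From mathcomp Require Import all_boot all_order all_algebra.
From mathcomp Require Import complex ring lra.
From mathcomp Require Import classical_sets reals trigo.
Import Order.TTheory GRing.Theory Num.Theory ComplexField.
Local Open Scope ring_scope.
Local Open Scope complex_scope.
Section S.
Variable R : realType.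
Local Notation C := R[i].
Implicit Types x y : C.
Local Notation Re := complex.Re.
Local Notation Im := complex.Im.
Lemma ReD x y : Re (x + y) = Re x + Re y. Proof. by case: x y => [? ?] [? ?]. Qed.
Lemma ImD x y : Im (x + y) = Im x + Im y. Proof. by case: x y => [? ?] [? ?]. Qed.
Lemma ReN x : Re (- x) = - Re x. Proof. by case: x. Qed.
Lemma ImN x : Im (- x) = - Im x. Proof. by case: x. Qed.
Lemma ReM x y : Re (x * y) = Re x * Re y - Im x * Im y. Proof. by case: x y => [? ?] [? ?]. Qed.
Lemma ImM x y : Im (x * y) = Re x * Im y + Im x * Re y. Proof. by case: x y => [? ?] [? ?]. Qed.
Lemma ReJ x : Re (x^*) = Re x. Proof. by case: x. Qed.
Lemma ImJ x : Im (x^*) = - Im x. Proof. by case: x. Qed.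
Lemma ReC (k : R) : Re (k%:C) = k. Proof. by []. Qed.
Lemma ImC (k : R) : Im (k%:C) = 0. Proof. by []. Qed.
Lemma Re_i : Re 'i = 0 :> R. Proof. by []. Qed.
Lemma Im_i : Im 'i = 1 :> R. Proof. by []. Qed.
Lemma Re1 : Re (1 : C) = 1. Proof. by []. Qed.
Lemma Im1 : Im (1 : C) = 0. Proof. by []. Qed.
Lemma Re0 : Re (0 : C) = 0. Proof. by []. Qed.
Lemma Im0 : Im (0 : C) = 0. Proof. by []. Qed.
Lemma halfC : (1 / 2%:R : C) = (1/2 : R)%:C.
Proof. have -> : (2%:R : C) = (2%:R : R)%:C by rewrite rmorph_nat. by rewrite fmorph_div rmorph1. Qed.
Lemma signC n : ((-1) ^+ n : C) = ((-1) ^+ n : R)%:C.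
Proof. by rewrite rmorphXn rmorphN1. Qed.
Definition i0 : 'I_2 := @Ordinal 2 0 isT.
Definition i1 : 'I_2 := @Ordinal 2 1 isT.
Lemma sum2 (T : nmodType) (F : 'I_2 -> T) : \sum_i F i = (F i0 + F i1)%R.
Proof.
rewrite !big_ord_recl big_ord0 addr0; congr (F _ + F _)%R; exact: val_inj.
Qed.
Lemma sum1 (T : nmodType) (F : 'I_1 -> T) : \sum_i F i = F ord0.
Proof. by rewrite big_ord1. Qed.

Lemma ReCpx (x y : R) : Re (x +i* y) = x. Proof. by []. Qed.
Lemma C1E : (1 : C) = 1 +i* 0. Proof. by []. Qed.
Lemma C0E : (0 : C) = 0 +i* 0. Proof. by []. Qed.
Lemma wigner_ket (a1 a2 b1 b2 : R) (q p : 'I_2) :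
  wigner (proj (ket (a1 +i* a2) (b1 +i* b2))) (q, p) =
  ((a1 ^+ 2 + a2 ^+ 2) * (1 + (-1) ^+ q) + (b1 ^+ 2 + b2 ^+ 2) * (1 - (-1) ^+ q)) / 4%:R
  + ((a1 * b1 + a2 * b2) * (-1) ^+ p
     - (a2 * b1 - a1 * b2) * (-1) ^+ (q + p)%N) / 2%:R.
Proof.
rewrite /wigner /= /mxtrace sum2 !mxE !sum2 !mxE !sum1 !mxE /=.
rewrite halfC !signC /real_complex_def C1E C0E.
simpc.
rewrite ReCpx. field => //.
Qed.

Lemma wigner_ket2 (a1 a2 b1 b2 N1 N2 w1 w2 : R) (q p : 'I_2) :
  a1 ^+ 2 + a2 ^+ 2 = N1 -> b1 ^+ 2 + b2 ^+ 2 = N2 ->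
  a1 * b1 + a2 * b2 = w1 -> a2 * b1 - a1 * b2 = w2 ->
  wigner (proj (ket (a1 +i* a2) (b1 +i* b2))) (q, p) =
  (N1 * (1 + (-1) ^+ q) + N2 * (1 - (-1) ^+ q)) / 4%:R
  + (w1 * (-1) ^+ p - w2 * (-1) ^+ (q + p)%N) / 2%:R.
Proof. by move=> <- <- <- <-; rewrite wigner_ket. Qed.

Definition r : R := (Num.sqrt (2%:R : R))^-1.
Lemma r2 : r ^+ 2 = 1 / 2%:R.
Proof. by rewrite /r exprVn sqr_sqrtr ?ler0n // mul1r. Qed.
Lemma invE : invsqrt2 R = r +i* 0. Proof. by []. Qed.
Lemma negC (x y : R) : - (x +i* y) = (- x) +i* (- y). Proof. by []. Qed.
Lemma iC (y : R) : 'i * (y +i* 0) = 0 +i* y :> C.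
Proof. by simpc. Qed.

Definition bl (k : 'I_6) : R * R * R :=
  match (k : nat) with
  | 0%N => (0, 0, 1) | 1%N => (0, 0, -1) | 2%N => (1, 0, 0) | 3%N => (-1, 0, 0)
  | 4%N => (0, 1, 0) | _ => (0, -1, 0) end.

Lemma wig_stab (k : 'I_6) (q p : 'I_2) :
  wigner (proj (stab_ket R k)) (q, p) =
  (1 + (bl k).1.1 * (-1) ^+ p + (bl k).1.2 * (-1) ^+ (q + p)%N + (bl k).2 * (-1) ^+ q) / 4%:R.
Proof.
have h2 := r2.
case: k => [[|[|[|[|[|[|//]]]]]] Hk]; rewrite /stab_ket /bl /=.
- rewrite C1E C0E (@wigner_ket2 _ _ _ _ 1 0 0 0); lra.
- rewrite C1E C0E (@wigner_ket2 _ _ _ _ 0 1 0 0); lra.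
- rewrite invE (@wigner_ket2 _ _ _ _ (1/2%:R) (1/2%:R) (1/2%:R) 0); lra.
- rewrite invE negC oppr0 (@wigner_ket2 _ _ _ _ (1/2%:R) (1/2%:R) (-(1/2%:R)) 0); lra.
- rewrite invE iC (@wigner_ket2 _ _ _ _ (1/2%:R) (1/2%:R) 0 (-(1/2%:R))); lra.
- rewrite invE iC negC oppr0 (@wigner_ket2 _ _ _ _ (1/2%:R) (1/2%:R) 0 (1/2%:R)); lra.
Qed.
End S.

Section T1.
Variable R : realType.
Local Notation C := R[i].
Local Notation r := (r R).

Lemma rho_ket (phi : R) :
  phase_gate phi *m ket_plus R = ket (r +i* 0) ((r * cos phi) +i* (r * sin phi)).
Proof.
apply/matrixP => i j; rewrite !mxE sum2 !mxE /=.
case: i => [[|[|//]] Hi] /=; rewrite invE /expi.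
  by rewrite mul1r mul0r addr0.
rewrite mul0r add0r; simpc.
by rewrite mulrC [sin _ * _]mulrC.
Qed.

Lemma wig_rho (phi : R) (q p : 'I_2) :
  wigner (proj (phase_gate phi *m ket_plus R)) (q, p) =
  (1 + cos phi * (-1) ^+ p + sin phi * (-1) ^+ (q + p)%N) / 4%:R.
Proof.
have h2 := r2 R.
have cs := cos2Dsin2 phi.
rewrite rho_ket (@wigner_ket2 _ _ _ _ _ (1/2%:R) (1/2%:R) (cos phi / 2%:R) (- (sin phi / 2%:R))).
- lra.
- lra.
- by rewrite !exprMn -mulrDr cs h2 mulr1.
- by rewrite mulrA -expr2 h2 mul0r addr0 mulrC mul1r.
- by rewrite mul0r sub0r mulrA -expr2 h2 mulrC mul1r.
Qed.

Definition o6 (n : nat) (H : (n < 6)%N) : 'I_6 := Ordinal H.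
Lemma sum6 (F : 'I_6 -> R) : \sum_k F k =
  F (@o6 0 isT) + F (@o6 1 isT) + F (@o6 2 isT) + F (@o6 3 isT) + F (@o6 4 isT) + F (@o6 5 isT).
Proof.
rewrite !big_ord_recl big_ord0 addr0 !addrA.
congr (_ + F _ + F _ + F _ + F _ + F _).
all: try (congr F); by apply: val_inj.
Qed.

Lemma sum4 (F : 'I_2 * 'I_2 -> R) : \sum_x F x =
  F (i0, i0) + F (i0, i1) + F (i1, i0) + F (i1, i1).
Proof.
have -> : \sum_x F x = \sum_x F (x.1, x.2) by apply: eq_bigr => -[].
by rewrite -(pair_bigA _ (fun i j => F (i, j))) /= sum2 !sum2 addrA.
Qed.

Lemma fexp (lam : 'I_6 -> R) (q p : 'I_2) :
  \sum_k lam k * wigner (proj (stab_ket R k)) (q, p) =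
  ((lam (@o6 0 isT) + lam (@o6 1 isT) + lam (@o6 2 isT) + lam (@o6 3 isT) + lam (@o6 4 isT) + lam (@o6 5 isT))
   + (lam (@o6 2 isT) - lam (@o6 3 isT)) * (-1) ^+ p
   + (lam (@o6 4 isT) - lam (@o6 5 isT)) * (-1) ^+ (q + p)%N
   + (lam (@o6 0 isT) - lam (@o6 1 isT)) * (-1) ^+ q) / 4%:R.
Proof. rewrite sum6 !wig_stab /bl /=. lra. Qed.

Lemma s00 : ((-1) ^+ (i0 : nat) = 1 :> R) * ((-1) ^+ ((i0 : nat) + (i0 : nat))%N = 1 :> R).
Proof. by []. Qed.
Lemma s01 : ((-1) ^+ (i1 : nat) = -1 :> R) * ((-1) ^+ ((i0 : nat) + (i1 : nat))%N = -1 :> R).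
Proof. by rewrite /= expr1. Qed.
Lemma s10 : ((-1) ^+ ((i1 : nat) + (i0 : nat))%N = -1 :> R).
Proof. by rewrite /= expr1. Qed.
Lemma s11 : ((-1) ^+ ((i1 : nat) + (i1 : nat))%N = 1 :> R).
Proof. by rewrite /= sqrrN expr1n. Qed.
Lemma sum_abs_ge (A B C D y : R) :
  (forall a b c d : R, A <= a -> -A <= a -> B <= b -> -B <= b -> C <= c -> -C <= c ->
     D <= d -> -D <= d -> y <= a + b + c + d) -> y <= `|A| + `|B| + `|C| + `|D|.
Proof. move=> H; apply: H; rewrite ?ler_norm // -normrN ler_norm //. Qed.

End T1.

Section T2.
Variable R : realType.
Local Notation r := (r R).
Lemma sum_abs_le' (A B C D y a b c d : R) :
  - a <= A <= a -> - b <= B <= b -> - c <= C <= c -> - d <= D <= d -> a + b + c + d <= y ->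
  `|A| + `|B| + `|C| + `|D| <= y.
Proof.
move=> h1 h2 h3 h4 h5.
apply: le_trans h5; apply: lerD; [apply: lerD; [apply: lerD|]|]; by rewrite ler_norml.
Qed.

Lemma l1_exp (phi : R) (lam : 'I_6 -> R) (f : 'I_2 * 'I_2 -> R)
  (hf : forall x, f x = \sum_k lam k * wigner (proj (stab_ket R k)) x) :
  let c := cos phi in let s := sin phi in
  let L := lam (@o6 0 isT) + lam (@o6 1 isT) + lam (@o6 2 isT) + lam (@o6 3 isT) + lam (@o6 4 isT) + lam (@o6 5 isT) in
  let u := lam (@o6 2 isT) - lam (@o6 3 isT) in
  let v := lam (@o6 4 isT) - lam (@o6 5 isT) in
  let w := lam (@o6 0 isT) - lam (@o6 1 isT) in
  l1norm (fun x => wigner (proj (phase_gate phi *m ket_plus R)) x - f x) =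
  `|(1 + c + s) / 4%:R - (L + u + v + w) / 4%:R| + `|(1 - c - s) / 4%:R - (L - u - v + w) / 4%:R|
  + `|(1 + c - s) / 4%:R - (L + u - v - w) / 4%:R| + `|(1 - c + s) / 4%:R - (L - u + v - w) / 4%:R|.
Proof.
move=> c s L u v w.
have hf' q p : f (q, p) = (L + u * (-1) ^+ p + v * (-1) ^+ (q + p)%N + w * (-1) ^+ q) / 4%:R.
  by rewrite hf fexp.
rewrite /l1norm sum4 !hf' !wig_rho !(s00, s01, s10, s11) -/c -/s.
congr (_ + _ + _ + _); congr (Num.norm _); lra.
Qed.

Definition lamL (l : seq R) : 'I_6 -> R := fun k => nth 0 l k.

Lemma ub_gen (phi : R) (l0 l1 l2 l3 l4 l5 a b c d y : R) :
  0 <= l0 -> 0 <= l1 -> 0 <= l2 -> 0 <= l3 -> 0 <= l4 -> 0 <= l5 ->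
  l0 + l1 + l2 + l3 + l4 + l5 = 1 ->
  let cc := cos phi in let ss := sin phi in
  let L := l0 + l1 + l2 + l3 + l4 + l5 in
  let u := l2 - l3 in let v := l4 - l5 in let w := l0 - l1 in
  - a <= (1 + cc + ss) / 4%:R - (L + u + v + w) / 4%:R <= a ->
  - b <= (1 - cc - ss) / 4%:R - (L - u - v + w) / 4%:R <= b ->
  - c <= (1 + cc - ss) / 4%:R - (L + u - v - w) / 4%:R <= c ->
  - d <= (1 - cc + ss) / 4%:R - (L - u + v - w) / 4%:R <= d ->
  a + b + c + d <= y ->
  exists2 f, W_free f & l1norm (fun x => wigner (proj (phase_gate phi *m ket_plus R)) x - f x) <= y.
Proof.
move=> h0 h1 h2 h3 h4 h5 hs cc ss L u v w ha hb hc hd hy.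
pose lam := lamL [:: l0; l1; l2; l3; l4; l5].
exists (fun x => \sum_k lam k * wigner (proj (stab_ket R k)) x).
  exists lam; split; last split => //.
    by case=> [[|[|[|[|[|[|//]]]]]] Hk].
  by rewrite sum6.
move: (@l1_exp phi lam _ (fun x => erefl)) => /= ->.
exact: sum_abs_le' ha hb hc hd hy.
Qed.

Lemma lb_gen (phi : R) (f : 'I_2 * 'I_2 -> R) : W_free f ->
  (`|sin phi| + `|cos phi| - 1) / 2%:R <= l1norm (fun x => wigner (proj (phase_gate phi *m ket_plus R)) x - f x).
Proof.
move=> [lam [l0 [l1 lf]]].
move: (l1_exp phi lam f lf) => /= ->.
rewrite sum6 in l1.
have := l0 (@o6 0 isT); have := l0 (@o6 1 isT); have := l0 (@o6 2 isT).
have := l0 (@o6 3 isT); have := l0 (@o6 4 isT); have := l0 (@o6 5 isT).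
move=> q5 q4 q3 q2 q1 q0.
apply: sum_abs_ge => a b c d h1 h2 h3 h4 h5 h6 h7 h8.
case: (lerP 0 (cos phi)) => hc; case: (lerP 0 (sin phi)) => hs.
- rewrite (ger0_norm hc) (ger0_norm hs); lra.
- rewrite (ger0_norm hc) (ltr0_norm hs); lra.
- rewrite (ltr0_norm hc) (ger0_norm hs); lra.
- rewrite (ltr0_norm hc) (ltr0_norm hs); lra.
Qed.

Lemma attain (phi : R) : exists2 f, W_free f &
  l1norm (fun x => wigner (proj (phase_gate phi *m ket_plus R)) x - f x) <=
  (`|sin phi| + `|cos phi| - 1) / 2%:R.
Proof.
have cs := cos2Dsin2 phi.
case: (lerP 0 (cos phi)) => hc; case: (lerP 0 (sin phi)) => hs.
- apply: (@ub_gen phi 0 0 ((1 + cos phi - sin phi)/2%:R) 0 ((1 - cos phi + sin phi)/2%:R) 0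
     ((cos phi + sin phi - 1)/4%:R) ((cos phi + sin phi - 1)/4%:R) 0 0);
  rewrite ?(ger0_norm hc) ?(ger0_norm hs) /=; try (apply/andP; split); try lra; nra.
- apply: (@ub_gen phi 0 0 ((1 + cos phi + sin phi)/2%:R) 0 0 ((1 - cos phi - sin phi)/2%:R)
     0 0 ((cos phi - sin phi - 1)/4%:R) ((cos phi - sin phi - 1)/4%:R));
  rewrite ?(ger0_norm hc) ?(ltr0_norm hs) /=; try (apply/andP; split); try lra; nra.
- apply: (@ub_gen phi 0 0 0 ((1 - cos phi - sin phi)/2%:R) ((1 + cos phi + sin phi)/2%:R) 0
     0 0 ((sin phi - cos phi - 1)/4%:R) ((sin phi - cos phi - 1)/4%:R));
  rewrite ?(ltr0_norm hc) ?(ger0_norm hs) /=; try (apply/andP; split); try lra; nra.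
- apply: (@ub_gen phi 0 0 0 ((1 - cos phi + sin phi)/2%:R) 0 ((1 + cos phi - sin phi)/2%:R)
     ((- cos phi - sin phi - 1)/4%:R) ((- cos phi - sin phi - 1)/4%:R) 0 0);
  rewrite ?(ltr0_norm hc) ?(ltr0_norm hs) /=; try (apply/andP; split); try lra; nra.
Qed.

Lemma main (phi : R) :
  wigner_distance (proj (phase_gate phi *m ket_plus R)) =
  (`|sin phi| + `|cos phi| - 1) / 2%:R.
Proof.
rewrite /wigner_distance.
set d := (_ / 2%:R).
set S := (X in inf X).
have Sd : S d.
  have [f Wf hle] := attain phi.
  exists f => //; apply/le_anti; rewrite hle andbT.
  exact: lb_gen.
have lbd : lbound S d by move=> y [f Wf ->]; exact: lb_gen.
apply/le_anti/andP; split.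
- by apply: ge_inf Sd; exists d.
- by apply: lb_le_inf => //; exists d.
Qed.
End T2.

Local Close Scope complex_scope.

Theorem lemma1 (R : realType) (phi : R) :
  wigner_distance (proj (phase_gate phi *m ket_plus R)) =
  (`|sin phi| + `|cos phi| - 1) / 2%:R.
Proof. exact: main. Qed.
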